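(* Let $q$ be any prime power and let $\mathcal{C}$ be the Hermitian-Lifted Code (defined in the context). Then $\mathcal{C}$ has locality $q$ and availability $q^2-1$: for every coordinate (indexed by a point $P \in \mathcal{X}$) there are $q^2-1$ pairwise disjoint sets of coordinates, each of size $q$ and not containing $P$, such that for every codeword $c \in \mathcal{C}$ the symbol $c_P$ can be recovered from the symbols of $c$ indexed by any one of these sets.
   Context: Let $q$ be a prime power. Let $\mathcal{X} = \{(x,y) \in (\mathbb{F}_{q^2})^2 : x^q + x = y^{q+1}\}$ be the set of affine $\mathbb{F}_{q^2}$-rational points of the Hermitian curve; $|\mathcal{X}| = q^3$. For $\alpha,\beta \in \mathbb{F}_{q^2}$, let $L_{\alpha,\beta}(t) = (\alpha t + \beta, t)$, and $\mathcal{L} = \{L_{\alpha,\beta} : \alpha,\beta \in \mathbb{F}_{q^2}\}$. Let $\mathcal{F}$ be the set of $f \in \mathbb{F}_{q^2}[x,y]$ such that for every $L \in \mathcal{L}$ there exists $g \in \mathbb{F}_{q^2}[t]$ with $\deg g \leq q-1$ and $f(L(t)) = g(t)$ for all $t \in \mathbb{F}_{q^2}$ with $L(t) \in \mathcal{X}$. The Hermitian-Lifted Code is $\mathcal{C} = \{ (f(P))_{P \in \mathcal{X}} : f \in \mathcal{F}\}$. A set $R$ of coordinates not containing $i$ is a recovery set for coordinate $i$ if $c_i$ is determined by $(c_j)_{j\in R}$ for every codeword $c$; a code has locality $r$ and availability $t$ if every coordinate has $t$ pairwise disjoint recovery sets each of size at most $r$. *)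

(* Defs.v *)
From HB Require Import structures.
From mathcomp Require Import all_boot all_order all_algebra all_field.
From mathcomp Require Import mpoly.
Set Implicit Arguments. Unset Strict Implicit. Unset Printing Implicit Defensive.
Import GRing.Theory.
Local Open Scope ring_scope.

Definition ev2 (F : finFieldType) (f : {mpoly F[2]}) (P : F * F) : F :=
  f.@[fun i : 'I_2 => if val i == 0%N then P.1 else P.2].

Definition herm_pts (F : finFieldType) (q : nat) : {set F * F} :=
  [set P : F * F | P.1 ^+ q + P.1 == P.2 ^+ q.+1].

Definition line_pt (F : finFieldType) (alpha beta t : F) : F * F :=
  (alpha * t + beta, t).

Definition lifted (F : finFieldType) (q : nat) (f : {mpoly F[2]}) : Prop :=
  forall alpha beta : F, exists g : {poly F},
    (size g <= q)%N /\
    forall t : F, line_pt alpha beta t \in herm_pts F q ->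
      ev2 f (line_pt alpha beta t) = g.[t].

(* codewords of the Hermitian-lifted code: words indexed by F*F whose
   coordinates at the points of herm_pts are (f(P))_P for some lifted f
   (coordinates outside the curve are irrelevant and ignored). *)
Definition herm_codeword (F : finFieldType) (q : nat) (c : F * F -> F) : Prop :=
  exists f : {mpoly F[2]}, lifted q f /\ forall P, P \in herm_pts F q -> c P = ev2 f P.

Definition recovery_set (F : finFieldType) (q : nat) (P : F * F) (R : {set F * F}) : Prop :=
  R \subset herm_pts F q /\ P \notin R /\
  forall c c' : F * F -> F, herm_codeword q c -> herm_codeword q c' ->
    (forall Q, Q \in R -> c Q = c' Q) -> c P = c' P.

(* Main.v *)
Require Import Defs.
From HB Require Import structures.
From mathcomp Require Import all_boot all_order all_algebra all_field.
From mathcomp Require Import mpoly.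
From mathcomp Require Import ring zify.
From Stdlib Require Import Lia.
Local Open Scope ring_scope.
Import GRing.Theory.

Lemma card_roots_lt (F : finFieldType) (p : {poly F}) :
  p != 0 -> (#|[set x | root p x]| < size p)%N.
Proof.
move=> p0; rewrite cardE; apply: max_poly_roots => //; last exact: enum_uniq.
by apply/allP => x; rewrite mem_enum inE.
Qed.

Lemma trace_roots (F : finFieldType) (q : nat) :
  (2 <= q)%N -> #|F| = (q ^ 2)%N ->
  (forall u v : F, (u + v) ^+ q = u ^+ q + v ^+ q) ->
  (forall x : F, x ^+ q ^+ q = x) ->
  (q <= #|[set w : F | (w ^+ q + w + 1 == 0)%R]|)%N.
Proof.
move=> q2 cF fD fK.
set Z := [set w : F | _].
pose Ap : {poly F} := 'X^q + ('X + 1).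
have sX1 : size ('X + 1 : {poly F}) = 2%N.
  by rewrite -polyC1 size_XaddC.
have sA : size Ap = q.+1.
  by rewrite /Ap size_polyDl ?size_polyXn // sX1 ltnS.
have A0 : Ap != 0 by rewrite -size_poly_eq0 sA.
pose Bp := Ap ^+ q.-1 - 1.
have sAe : size (Ap ^+ q.-1) = (q * q.-1).+1.
  have := size_exp Ap q.-1; rewrite sA /= => <-.
  by rewrite prednK // lt0n size_poly_eq0 expf_neq0.
have sB : size Bp = (q * q.-1).+1.
  rewrite /Bp size_polyDl // size_polyN size_poly1 sAe ltnS.
  have q1 : (0 < q.-1)%N by rewrite -ltnS (prednK (ltnW q2)).
  by rewrite muln_gt0 q1 (ltnW q2).
have B0 : Bp != 0 by rewrite -size_poly_eq0 sB.
have sub : ~: Z \subset [set x | root Bp x].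
  apply/subsetP => w; rewrite !inE => yn0.
  have hA : Ap.[w] = w ^+ q + w + 1 by rewrite /Ap !hornerE ?addrA.
  rewrite /Bp rootE hornerD hornerN horner_exp hA hornerC subr_eq0.
  set y := w ^+ q + w + 1 in yn0 *.
  have yq : y ^+ q = y by rewrite /y !fD fK expr1n [w + _]addrC.
  move: yq; rewrite -{1}(prednK (ltnW q2)) exprSr => e.
  apply/eqP; apply: (mulIf yn0); by rewrite mul1r.
have := subset_leq_card sub.
have := @card_roots_lt _ Bp B0; rewrite sB ltnS => h1 h2.
have := cardsC Z; rewrite cF => e.
have : (#|~: Z| <= q * q.-1)%N := leq_trans h2 h1.
move=> h3; have qS := prednK (ltnW q2).
move: h3 e; set m := q.-1 in qS *; rewrite -qS; nia.
Qed.

Lemma on_curve (F : fieldType) (q : nat) (a b al w : F) :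
  (0 < q)%N ->
  (forall u v : F, (u + v) ^+ q = u ^+ q + v ^+ q) ->
  (forall u : F, (- u) ^+ q = - u ^+ q) ->
  (forall x : F, x ^+ q ^+ q = x) ->
  a ^+ q + a = b ^+ q.+1 -> w ^+ q + w + 1 = 0 ->
  let t := b + (b - al ^+ q) / w in
  (al * t + (a - al * b)) ^+ q + (al * t + (a - al * b)) = t ^+ q.+1.
Proof.
move=> q0 fD fN fK hab hw t.
have wq : w ^+ q = - (w + 1).
  by apply/eqP; rewrite -addr_eq0 addrA hw.
have w0 : w != 0.
  apply/eqP => e; move: hw; rewrite e expr0n eqn0Ngt q0 /= !add0r => /eqP.
  by rewrite oner_eq0.
have w1 : - (w + 1) != 0.
  by rewrite -wq expf_neq0.
set s := (b - al ^+ q) / w in t *.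
have sq : s ^+ q = (b ^+ q - al) / (- (w + 1)).
  by rewrite /s exprMn exprVn fD fN fK wq.
have xe : al * t + (a - al * b) = al * s + a by rewrite /t; ring.
have aq : a ^+ q = b ^+ q * b - a by rewrite -exprSr -hab addrK.
rewrite xe fD exprMn sq aq /t exprS fD sq /s.
field; by rewrite w0 w1.
Qed.

Definition Sal {F : finFieldType} (q : nat) (a b al : F) : {set F * F} :=
  [set Q : F * F | [&& Q \in herm_pts F q, Q.1 == al * Q.2 + (a - al * b) & Q.2 != b]].

Lemma recov (F : finFieldType) (q : nat) (a b al : F) (R : {set F * F}) :
  (a, b) \in herm_pts F q ->
  #|R| = q -> R \subset Sal q a b al -> recovery_set q (a, b) R.
Proof.
move=> Pin cR /subsetP sR; split; [|split].
- by apply/subsetP => Q /sR; rewrite inE => /and3P[].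
- by apply/negP => /sR; rewrite inE /= eqxx !andbF.
move=> c c' [f [lf hf]] [f' [lf' hf']] agree.
have [g [sg hg]] := lf al (a - al * b).
have [g' [sg' hg']] := lf' al (a - al * b).
have Pl : line_pt al (a - al * b) b = (a, b).
  by rewrite /line_pt addrC subrK.
have Ql : forall Q, Q \in R -> line_pt al (a - al * b) Q.2 = Q.
  move=> [x y] /sR; rewrite inE /= => /and3P[_ /eqP -> _].
  by [].
rewrite hf // hf' // -Pl hg ?hg' ?Pl //.
suff : g - g' = 0 by move/eqP; rewrite subr_eq0 => /eqP ->.
apply: (@roots_geq_poly_eq0 _ _ [seq Q.2 | Q <- enum R]).
- apply/allP => t /mapP [Q QR ->]; rewrite mem_enum in QR.
  have QH : Q \in herm_pts F q by move: (sR _ QR); rewrite inE => /and3P[].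
  rewrite rootE hornerD hornerN subr_eq0 -hg ?Ql // -hg' ?Ql //.
  by rewrite -hf // -hf' // agree.
- rewrite (@map_inj_in_uniq _ _ (fun Q : F * F => Q.2)) ?enum_uniq // => Q1 Q2; rewrite !mem_enum => Q1R Q2R e.
  by rewrite -(Ql _ Q1R) -(Ql _ Q2R) e.
rewrite size_map -cardE cR.
apply: leq_trans (size_polyD _ _) _.
by rewrite size_polyN geq_max sg sg'.
Qed.

Lemma bigS (F : finFieldType) (q : nat) (a b al : F) :
  (2 <= q)%N -> #|F| = (q ^ 2)%N ->
  (forall u v : F, (u + v) ^+ q = u ^+ q + v ^+ q) ->
  (forall u : F, (- u) ^+ q = - u ^+ q) ->
  (forall x : F, x ^+ q ^+ q = x) ->
  a ^+ q + a = b ^+ q.+1 -> al != b ^+ q ->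
  (q <= #|Sal q a b al|)%N.
Proof.
move=> q2 cF fD fN fK hab alb.
set Z := [set w : F | (w ^+ q + w + 1 == 0)%R].
have D0 : b - al ^+ q != 0.
  apply: contra alb; rewrite subr_eq0 => /eqP ->; by rewrite fK.
have Zw0 : forall w, w \in Z -> w != 0.
  move=> w; rewrite inE; apply: contraTneq => ->.
  by rewrite expr0n -[q]prednK ?(ltnW q2) //= !add0r oner_eq0.
pose phi (w : F) := (al * (b + (b - al ^+ q) / w) + (a - al * b), b + (b - al ^+ q) / w).
have sub : phi @: Z \subset Sal q a b al.
  apply/subsetP => Q /imsetP [w wZ ->]; rewrite inE /= eqxx /=.
  apply/andP; split.
    rewrite inE /phi /=; apply/eqP; apply: on_curve => //; first exact: ltnW.
    by apply/eqP; move: wZ; rewrite inE.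
  rewrite -subr_eq0 addrC addKr.
  by rewrite mulf_neq0 // invr_neq0 // Zw0.
have inj : {in Z &, injective phi}.
  move=> w1 w2 w1Z w2Z [_] /addrI /(mulfI D0) /invr_inj //.
apply: leq_trans (@trace_roots _ _ q2 cF fD fK) _.
by rewrite -(card_in_imset inj) subset_leq_card.
Qed.

Theorem mainTheorem2 (F : finFieldType) (q : nat) :
  (exists p k : nat, [/\ prime p, (0 < k)%N & q = (p ^ k)%N]) ->
  #|F| = (q ^ 2)%N ->
  forall P : F * F, P \in herm_pts F q ->
  exists R : 'I_(q ^ 2 - 1) -> {set F * F},
    (forall i, #|R i| = q /\ recovery_set q P (R i)) /\
    (forall i j, i != j -> [disjoint R i & R j]).
Proof.
move=> [p [k [pp k0 qE]]] cF [a b] Pin.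
have chp : p \in [pchar F].
  by apply: (@card_finPcharP F p (k * 2)) => //; rewrite cF qE -expnM.
have qnat : [pchar F].-nat q by rewrite qE pnatX (pnatE _ pp) chp.
have q2 : (2 <= q)%N.
  rewrite qE; apply: leq_trans (prime_gt1 pp) _.
  by rewrite -{1}(expn1 p) leq_pexp2l // prime_gt0.
have fD : forall u v : F, (u + v) ^+ q = u ^+ q + v ^+ q.
  by move=> u v; rewrite exprDn_pchar.
have fN : forall u : F, (- u) ^+ q = - u ^+ q.
  by move=> u; rewrite exprNn_pchar.
have fK : forall x : F, x ^+ q ^+ q = x.
  by move=> x; rewrite -exprM mulnn -cF expf_card.
have hab : a ^+ q + a = b ^+ q.+1 by apply/eqP; move: Pin; rewrite inE.
pose A := [set~ b ^+ q].
have eA : (q ^ 2 - 1 = #|A|)%N by rewrite cardsC1 cF subn1.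
pose al (i : 'I_(q ^ 2 - 1)) := enum_val (cast_ord eA i).
have alA : forall i, al i != b ^+ q.
  by move=> i; have := enum_valP (cast_ord eA i); rewrite !inE.
pose R i := [set x in take q (enum (Sal q a b (al i)))].
exists R; split.
  move=> i; have bS := @bigS _ _ a b (al i) q2 cF fD fN fK hab (alA i).
  have cR : #|R i| = q.
    rewrite cardsE (card_uniqP _); last by rewrite take_uniq ?enum_uniq.
    by rewrite size_takel // -cardE.
  split => //; apply: (@recov _ _ a b (al i)) => //.
  by apply/subsetP => x; rewrite inE => /mem_take; rewrite mem_enum.
move=> i j ij; rewrite -setI_eq0; apply/set0Pn => -[[x y]].
rewrite !inE => /andP[/mem_take + /mem_take]; rewrite !mem_enum !inE /=.
move=> /and3P[_ /eqP ei yb] /and3P[_ /eqP ej _].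
move: ij; apply/negP; rewrite negbK.
have : (al i - al j) * (y - b) = 0.
  have -> : (al i - al j) * (y - b) = (al i * y + (a - al i * b)) - (al j * y + (a - al j * b)) by ring.
  by rewrite -ei -ej subrr.
move/eqP; rewrite mulf_eq0 subr_eq0 subr_eq0 (negbTE yb) orbF => /eqP e.
have e2 : cast_ord eA i = cast_ord eA j.
  by apply: (@enum_val_inj _ A); exact: e.
by apply/eqP; exact: (cast_ord_inj e2).
Qed.
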